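(* Let $\Delta:M_n\to M_n$ be a weak-2-local derivation, let $p_1,\ldots,p_n$ be mutually orthogonal minimal projections in $M_n$, and let $q=1-p_n$. Let $R\subseteq\{1,\ldots,n-1\}$ and set $r=\sum_{i\in R}p_i$ if $R\neq\emptyset$ and $r=0$ if $R=\emptyset$. Assume $\Delta(qaq+rap_n)=0$ for every $a\in M_n$, and $\Delta(e_{kn})=0$ for some $1\le k\le n-1$. Then $\Delta(qaq+rap_n+\lambda e_{kn})=0$ for every $a\in M_n$ and $\lambda\in\mathbb{C}$.
   Context: $M_n=M_n(\mathbb{C})$. For $i,j$, $e_{ij}$ is the unique minimal partial isometry in $M_n$ with $e_{ij}^*e_{ij}=p_j$ and $e_{ij}e_{ij}^*=p_i$. A derivation on $M_n$ is a linear map $D$ with $D(ab)=D(a)b+aD(b)$. A (not necessarily linear) map $\Delta:M_n\to M_n$ is a weak-2-local derivation if for every $a,b\in M_n$ and every $\phi\in M_n^*$ there exists a derivation $D_{a,b,\phi}$ such that $\phi\Delta(a)=\phi D_{a,b,\phi}(a)$ and $\phi\Delta(b)=\phi D_{a,b,\phi}(b)$. *)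

(* Defs.v *)
From mathcomp Require Import all_boot all_algebra.
From mathcomp Require Import complex Rstruct.
Set Implicit Arguments. Unset Strict Implicit. Unset Printing Implicit Defensive.
Import GRing.Theory Num.Theory.
Local Open Scope ring_scope.

Definition C : numClosedFieldType := (Rdefinitions.R)[i].

Definition adj_mx (m : nat) (A : 'M[C]_m) : 'M[C]_m := (map_mx (@conjc _) A)^T.

Definition is_proj (m : nat) (p : 'M[C]_m) : Prop :=
  adj_mx p = p /\ p *m p = p.

(* Minimal projection: a nonzero projection whose only subprojections
   (projections e with e <= p, i.e. e p = e) are 0 and p. *)
Definition is_min_proj (m : nat) (p : 'M[C]_m) : Prop :=
  is_proj p /\ p != 0 /\
  forall e : 'M[C]_m, is_proj e -> e *m p = e -> e = 0 \/ e = p.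

Definition is_linear_map (m : nat) (D : 'M[C]_m -> 'M[C]_m) : Prop :=
  forall (c : C) (x y : 'M[C]_m), D (c *: x + y) = c *: D x + D y.

Definition is_linear_functional (m : nat) (phi : 'M[C]_m -> C) : Prop :=
  forall (c : C) (x y : 'M[C]_m), phi (c *: x + y) = c * phi x + phi y.

Definition is_derivation (m : nat) (D : 'M[C]_m -> 'M[C]_m) : Prop :=
  is_linear_map D /\ forall a b : 'M[C]_m, D (a *m b) = D a *m b + a *m D b.

Definition is_weak_2_local_derivation (m : nat) (Delta : 'M[C]_m -> 'M[C]_m)
  : Prop :=
  forall (a b : 'M[C]_m) (phi : 'M[C]_m -> C), is_linear_functional phi ->
    exists D : 'M[C]_m -> 'M[C]_m, is_derivation D /\
      phi (Delta a) = phi (D a) /\ phi (Delta b) = phi (D b).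

(* Main.v *)
Require Import Defs.
From mathcomp Require Import all_boot all_algebra.
From mathcomp Require Import complex Rstruct.
Import GRing.Theory Num.Theory.
Local Open Scope ring_scope.

Lemma trsum (m : nat) (I : Type) (r : seq I) (P : pred I) (F : I -> 'M[C]_m) :
  \tr (\sum_(i <- r | P i) F i) = \sum_(i <- r | P i) \tr (F i).
Proof. exact: (big_morph _ (@mxtraceD _ _) (mxtrace0 _ _)). Qed.

Section Aux.
Variable m : nat.
Variable D : 'M[C]_m.+1 -> 'M[C]_m.+1.
Hypothesis HD : is_derivation D.

Lemma D0 : D 0 = 0.
Proof.
have := (HD.1 1 0 0); rewrite !scale1r addr0 => h.
have: D 0 + 0 = D 0 + D 0 by rewrite addr0 -h.
by move/addrI=> <-.
Qed.

Lemma DD x y : D (x + y) = D x + D y.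
Proof. by have := HD.1 1 x y; rewrite !scale1r. Qed.

Lemma DZ c x : D (c *: x) = c *: D x.
Proof. by have := HD.1 c x 0; rewrite !addr0 D0 addr0. Qed.

Lemma trDC a b : \tr (D (a *m b)) = \tr (D (b *m a)).
Proof.
rewrite !HD.2 !mxtraceD [\tr (D a *m b)]mxtrace_mulC [\tr (a *m D b)]mxtrace_mulC.
by rewrite addrC.
Qed.

Lemma trD v : \tr (D v) = 0.
Proof.
have Dsum : forall (I : Type) (r : seq I) (P : pred I) (F : I -> 'M[C]_m.+1),
  D (\sum_(i <- r | P i) F i) = \sum_(i <- r | P i) D (F i).
  by move=> I r P F; apply: (big_morph D DD D0).
have diag : forall i, \tr (D (delta_mx i i)) = \tr (D (delta_mx 0 0)).
  move=> i; rewrite -(mul_delta_mx (0 : 'I_m.+1) i i) trDC mul_delta_mx //.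
have off : forall i j, i != j -> \tr (D (delta_mx i j)) = 0.
  move=> i j hij; rewrite -(mul_delta_mx (0 : 'I_m.+1) i j) trDC mul_delta_mx_cond.
  by rewrite eq_sym (negbTE hij) mulr0n D0 mxtrace0.
have D1 : D 1%:M = 0.
  have := HD.2 1%:M 1%:M; rewrite !mulmx1 mul1mx => h.
  have: D 1%:M + 0 = D 1%:M + D 1%:M by rewrite addr0 -h.
by move/addrI=> <-.
have t0 : \tr (D (delta_mx 0 0)) = 0.
  have := congr1 mxtrace D1; rewrite mx1_sum_delta Dsum trsum mxtrace0.
  under eq_bigr => i _ do rewrite diag.
  rewrite sumr_const card_ord => /eqP; rewrite mulrn_eq0 /= => /eqP //.
rewrite [v]matrix_sum_delta Dsum trsum big1 // => i _.
rewrite Dsum trsum big1 // => j _.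
rewrite DZ mxtraceZ.
case: (eqVneq i j) => [<-|hij]; first by rewrite diag t0 mulr0.
by rewrite off // mulr0.
Qed.

Lemma trxDx x : \tr (x *m D x) = 0.
Proof.
have := trD (x *m x); rewrite HD.2 mxtraceD mxtrace_mulC => /eqP.
rewrite -mulr2n mulrn_eq0 /= => /eqP //.
Qed.

Lemma trwDx x w : \tr (w *m D x) = - \tr (x *m D w).
Proof.
have := trD (w *m x); rewrite HD.2 mxtraceD mxtrace_mulC => /eqP.
by rewrite addrC addr_eq0 => /eqP.
Qed.

End Aux.
Arguments trxDx {m D}.
Arguments trwDx {m D}.

Lemma tr_delta_mul (m : nat) (i j : 'I_m) (M : 'M[C]_m) :
  \tr (delta_mx j i *m M) = M i j.
Proof.
rewrite /mxtrace (bigD1 j) //= big1 ?addr0.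
  rewrite mxE (bigD1 i) //= big1 ?addr0; first by rewrite mxE !eqxx mul1r.
  by move=> k hk; rewrite mxE eqxx (negbTE hk) mul0r.
move=> k hk; rewrite mxE big1 // => l _.
by rewrite mxE (negbTE hk) mul0r.
Qed.

Lemma nondeg (m : nat) (M : 'M[C]_m) :
  (forall w, \tr (w *m M) = 0) -> M = 0.
Proof.
by move=> h; apply/matrixP => i j; rewrite mxE -tr_delta_mul h.
Qed.

Lemma tr_lin (m : nat) (y : 'M[C]_m) :
  is_linear_functional (fun v => \tr (y *m v)).
Proof.
by move=> c a b; rewrite mulmxDr -scalemxAr mxtraceD mxtraceZ.
Qed.

Arguments tr_lin {m}.

Lemma trB (m : nat) (A B : 'M[C]_m) : \tr (A - B) = \tr A - \tr B.
Proof. by rewrite linearB. Qed.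
Arguments trB {m}.

Lemma antisym (m : nat) (Delta : 'M[C]_m.+1 -> 'M[C]_m.+1) :
  is_weak_2_local_derivation Delta ->
  forall x w, \tr (w *m Delta x) = - \tr (x *m Delta w).
Proof.
move=> HW x w.
have hxx : forall y, \tr (y *m Delta y) = 0.
  move=> y; have [D [HD [h _]]] := HW y y _ (tr_lin y).
  by rewrite h (trxDx HD).
have [D [HD [h1 h2]]] := HW x w _ (tr_lin (x - w)).
move: h1 h2.
rewrite !mulmxBl.
rewrite (trB (x *m Delta x)) (trB (x *m Delta w)) (trB (x *m D x)) (trB (x *m D w)).
rewrite (hxx x) (hxx w).
rewrite (trxDx HD x) (trxDx HD w).
rewrite !sub0r subr0 => /oppr_inj -> ->.
by rewrite subr0; exact: trwDx.
Qed.
Arguments antisym {m Delta}.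

Theorem lemma2p6 (n : nat) (Delta : 'M[C]_n.+1 -> 'M[C]_n.+1)
  (p : 'I_n.+1 -> 'M[C]_n.+1) (R : {set 'I_n.+1}) (k : 'I_n.+1)
  (ekn : 'M[C]_n.+1) :
  is_weak_2_local_derivation Delta ->
  (forall i, is_min_proj (p i)) ->
  (forall i j, i != j -> p i *m p j = 0) ->
  ord_max \notin R ->
  k != ord_max ->
  adj_mx ekn *m ekn = p ord_max ->
  ekn *m adj_mx ekn = p k ->
  let q := 1%:M - p ord_max in
  let r := \sum_(i in R) p i in
  (forall a : 'M[C]_n.+1, Delta (q *m a *m q + r *m a *m p ord_max) = 0) ->
  Delta ekn = 0 ->
  forall (a : 'M[C]_n.+1) (lambda : C),
    Delta (q *m a *m q + r *m a *m p ord_max + lambda *: ekn) = 0.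
Proof.
move=> HW _ _ _ _ _ _ q r HS He a lambda.
apply: nondeg => w.
rewrite (antisym HW) mulmxDl mxtraceD -scalemxAl mxtraceZ.
rewrite -(opprK (\tr (_ *m Delta w))) -(antisym HW) HS.
rewrite -(opprK (\tr (ekn *m Delta w))) -(antisym HW) He.
by rewrite !mulmx0 mxtrace0 oppr0 mulr0 addr0 oppr0.
Qed.
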